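(* Let $F\subset\mathbb R^d$ be a closed set such that $\partial\operatorname{conv}F$ contains no rays. Then $\operatorname{cl}\operatorname{conv}F=\operatorname{conv}F$.
   Context: $\operatorname{conv}$ denotes convex hull and $\operatorname{cl}$ closure. A ray is a set $\{x+te: t\ge0\}$ with $x\in\mathbb R^d$, $e\ne0$. *)

(* Defs.v *)
From HB Require Import structures.
From mathcomp Require Import all_boot all_order all_algebra.
From mathcomp Require Import all_classical all_reals all_analysis.
Set Implicit Arguments. Unset Strict Implicit. Unset Printing Implicit Defensive.
Import Order.TTheory GRing.Theory Num.Theory.
Import numFieldNormedType.Exports.
Local Open Scope classical_set_scope.
Local Open Scope ring_scope.

(* R^d is modelled as row vectors 'rV[R]_d, with its canonical (product/sup-norm) topology. *)

Definition conv_hull (R : realType) (d : nat) (A : set 'rV[R]_d) : set 'rV[R]_d :=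
  [set x | exists (n : nat) (w : 'I_n -> R) (p : 'I_n -> 'rV[R]_d),
     [/\ (forall i, 0 <= w i), \sum_(i < n) w i = 1,
         (forall i, A (p i)) & x = \sum_(i < n) w i *: p i]].

Definition boundary (R : realType) (d : nat) (A : set 'rV[R]_d) : set 'rV[R]_d :=
  closure A `\` interior A.

Definition ray (R : realType) (d : nat) (x e : 'rV[R]_d) : set 'rV[R]_d :=
  [set x + t *: e | t in [set t : R | 0 <= t]].

(* Main.v *)
Require Import Defs.
From HB Require Import structures.
From mathcomp Require Import all_boot all_order all_algebra.
From mathcomp Require Import all_classical all_reals all_analysis.
From mathcomp Require Import ring lra.
Import Order.TTheory GRing.Theory Num.Theory.
Import numFieldNormedType.Exports.
Local Open Scope classical_set_scope.
Local Open Scope ring_scope.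
Set Implicit Arguments. Unset Strict Implicit. Unset Printing Implicit Defensive.

Section Alg.
Variables (R : realType) (d : nat) (F : set 'rV[R]_d).
Local Notation C := (conv_hull F).

Lemma split_l m n (i : 'I_m) : fintype.split (lshift n i) = inl i.
Proof. exact: (unsplitK (inl i)). Qed.
Lemma split_r m n (i : 'I_n) : fintype.split (rshift m i) = inr i.
Proof. exact: (unsplitK (inr i)). Qed.

Definition rep n (x : 'rV[R]_d) := exists (w : 'I_n -> R) (p : 'I_n -> 'rV[R]_d),
     [/\ (forall i, 0 <= w i), \sum_(i < n) w i = 1,
         (forall i, F (p i)) & x = \sum_(i < n) w i *: p i].

Lemma conv_comb (a b : 'rV[R]_d) t : C a -> C b -> 0 <= t -> t <= 1 ->
  C ((1 - t) *: a + t *: b).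
Proof.
move=> [n [w [p [w0 w1 pF ->]]]] [m [w' [p' [w0' w1' pF' ->]]]] t0 t1.
exists (n + m)%N.
exists (fun i => match fintype.split i with inl k => (1 - t) * w k | inr k => t * w' k end).
exists (fun i => match fintype.split i with inl k => p k | inr k => p' k end).
split.
- move=> i; case: (fintype.split i) => k; apply: mulr_ge0 => //; by rewrite subr_ge0.
- rewrite big_split_ord /=.
  under eq_bigr do rewrite split_l.
  under [X in _ + X]eq_bigr do rewrite split_r.
  by rewrite -!mulr_sumr w1 w1' !mulr1 subrK.
- by move=> i; case: (fintype.split i).
- rewrite big_split_ord /=.
  symmetry; under eq_bigr do rewrite split_l.
  under [X in _ + X]eq_bigr do rewrite split_r.
  rewrite !scaler_sumr; congr (_ + _); apply: eq_bigr => i _; by rewrite scalerA.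
Qed.


Lemma rep_pad n x : rep n x -> rep n.+1 x.
Proof.
case: n => [|n] [w [p [w0 w1 pF ->]]].
  by move: w1; rewrite big_ord0 => /eqP; rewrite eq_sym oner_eq0.
have wl (i : 'I_n.+1) : ((widen_ord (leqnSn n.+1) i) < n.+1)%N by rewrite /= ltn_ord.
have wi (i : 'I_n.+1) : inord (widen_ord (leqnSn n.+1) i) = i by rewrite inord_val.
have mx : (@ord_max n.+1 < n.+1)%N = false by rewrite /= ltnn.
exists (fun i : 'I_n.+2 => if (i < n.+1)%N then w (inord i) else 0).
exists (fun i : 'I_n.+2 => if (i < n.+1)%N then p (inord i) else p ord0).
split.
- by move=> i; case: ifP.
- rewrite big_ord_recr /= [X in _ + X]ifF; last exact: ltnn.
  by rewrite addr0; under eq_bigr do rewrite ltn_ord inord_val.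
- by move=> i; case: ifP.
- symmetry; rewrite big_ord_recr /= [X in _ + (X *: _)]ifF; last exact: ltnn.
  by rewrite scale0r addr0; under eq_bigr do rewrite ltn_ord inord_val.
Qed.

Lemma rep_padn n m x : (n <= m)%N -> rep n x -> rep m x.
Proof.
elim: m => [|m IH]; first by rewrite leqn0 => /eqP ->.
rewrite leq_eqVlt => /orP[/eqP -> //|]; rewrite ltnS => nm rx.
exact/rep_pad/IH.
Qed.

Lemma rep_reduce n x : (d.+1 < n.+1)%N -> rep n.+1 x -> rep n x.
Proof.
move=> dn [w [p [w0 w1 pF ->]]].
pose M : 'M[R]_(n.+1, d + 1) := row_mx (\matrix_i p i) (const_mx 1).
have : kermx M != 0.
  rewrite -mxrank_eq0 mxrank_ker subn_eq0 -ltnNge.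
  by apply: leq_ltn_trans (rank_leq_col M) _; rewrite addn1.
move=> /eqP kn0.
have [k rk] : exists k, row k (kermx M) != 0.
  apply: contrapT => H; apply: kn0; apply/row_matrixP => i; rewrite row0.
  apply/eqP; apply: contrapT => ne; apply: H; exists i; exact/negP.
set mu := row k (kermx M) in rk.
have muM : mu *m M = 0 by rewrite -row_mul mulmx_ker row0.
move: muM; rewrite mul_mx_row => /eqP; rewrite row_mx_eq0 => /andP[/eqP mP /eqP m1].
pose m i := mu 0 i.
have msum : \sum_i m i *: p i = 0.
  rewrite -[RHS]mP mulmx_sum_row; apply: eq_bigr => i _; by rewrite rowK.
have msum1 : \sum_i m i = 0.
  have e := congr1 (fun A : 'M[R]_(1,1) => A 0 0) m1; rewrite !mxE /= in e.
  rewrite -[RHS]e; apply: eq_bigr => i _; by rewrite [const_mx 1 i 0]mxE mulr1.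
have [i0 mi0] : exists i, 0 < m i.
  apply: contrapT => H; move/negP: rk; apply; apply/eqP/rowP => i; rewrite [RHS]mxE.
  have mle j : m j <= 0 by rewrite leNgt; apply/negP => mj; apply: H; exists j.
  have h1 : forall j, predT j -> 0 <= - m j by move=> j _; rewrite oppr_ge0.
  have h2 : \sum_(j | predT j) - m j = 0 by rewrite sumrN msum1 oppr0.
  have := @psumr_eq0P _ _ _ _ h1 h2 i isT.
  by move/eqP; rewrite oppr_eq0 => /eqP.
case: (@arg_minP _ _ _ i0 (fun i => 0 < m i) (fun i => w i / m i) mi0) => k0 mk kmin.
set th := w k0 / m k0.
have th0 : 0 <= th by rewrite divr_ge0 // ltW.
pose w' i := w i - th * m i.
have w'0 i : 0 <= w' i.
  rewrite /w' subr_ge0; have [mi|] := ltP 0 (m i).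
    by rewrite -ler_pdivlMr //; exact: kmin.
  by move=> mi; apply: le_trans (w0 i); rewrite mulr_ge0_le0.
have w'k : w' k0 = 0 by rewrite /w' /th divfK ?subrr // gt_eqF.
have sw' : \sum_i w' i = 1 by rewrite /w' sumrB -mulr_sumr msum1 mulr0 subr0.
have sx : \sum_i w' i *: p i = \sum_i w i *: p i.
  rewrite /w'; under eq_bigr do rewrite scalerBl -scalerA.
  by rewrite sumrB -scaler_sumr msum scaler0 subr0.
exists (fun i => w' (lift k0 i)), (fun i => p (lift k0 i)); split => //.
- by rewrite -sw' (bigD1_ord k0) //= w'k add0r.
- by rewrite -sx (bigD1_ord k0) //= w'k scale0r add0r.
Qed.

Lemma caratheodory x : C x -> rep d.+1 x.
Proof.
move=> [n Hn]; have : rep n x by [].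
elim: n {Hn} => [|n IH] r.
  by case: r => w [p [_ w1 _ _]]; move: w1; rewrite big_ord0 => /eqP; rewrite eq_sym oner_eq0.
have [nd|dn] := leqP n.+1 d.+1; first exact: rep_padn r.
exact/IH/rep_reduce.
Qed.

End Alg.


Lemma ultra_lim {T : Type} (U : set_system T) (UU : UltraFilter U)
  {V : topologicalType} (f : T -> V) (A : set V) :
  compact A -> U (f @^-1` A) -> exists l, A l /\ f @ U --> l.
Proof.
move=> cA UA.
have UP : ProperFilter U := ultra_proper.
have [l [Al cl]] := cA (f @ U) _ UA.
exists l; split => // B nB.
case: (in_ultra_setVsetC (f @^-1` B) UU) => // H.
have [z [nz bz]] := cl (~` B) B H nB.
by [].
Qed.

Lemma cvg_bigsum (R : realType) {T : Type} (U : set_system T) {FU : Filter U}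
  {V : normedModType R} (I : Type) (s : seq I) (P : pred I)
  (f : I -> T -> V) (l : I -> V) :
  (forall i, f i @ U --> l i) ->
  (fun j => \sum_(i <- s | P i) f i j) @ U --> \sum_(i <- s | P i) l i.
Proof.
move=> H; elim: s => [|a s IH].
  under eq_fun do rewrite big_nil.
  rewrite big_nil; exact: cvg_cst.
under eq_fun do rewrite big_cons.
rewrite big_cons; case: (P a) => //.
exact: cvgD.
Qed.

Lemma le_sum_term (R : realType) n (f : 'I_n -> R) i :
  (forall k, 0 <= f k) -> f i <= \sum_k f k.
Proof. by move=> f0; rewrite (bigD1 i) //= lerDl sumr_ge0. Qed.

Lemma ball_compact (R : realType) n (M : R) : compact [set v : 'rV[R]_n | `|v| <= M].
Proof.
apply: bounded_closed_compact.
  rewrite /bounded_set /=; rewrite /bounded_near.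
  apply: filterS (nbhs_pinfty_ge (num_real M)) => M' MM' v /= vM.
  exact: le_trans vM MM'.
have -> : [set v : 'rV[R]_n | `|v| <= M] = (@Num.norm _ _) @^-1` [set r : R | r <= M] by [].
apply: preimage_closed; last exact: closed_le.
move=> v _; exact: norm_continuous.
Qed.

Lemma lim_uniq (R : realType) {T : Type} (U : set_system T) {PU : ProperFilter U}
  {V : normedModType R} (f : T -> V) (a b : V) : f @ U --> a -> f @ U --> b -> a = b.
Proof. by move=> ha hb; apply: (@cvg_unique _ (@norm_hausdorff R V) _ _ a b ha hb). Qed.

Lemma lim_near {T : Type} (U : set_system T) {FU : Filter U} {V : topologicalType}
  (f g : T -> V) (l : V) :
  (\forall j \near U, f j = g j) -> g @ U --> l -> f @ U --> l.
Proof.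
move=> e h; apply: cvg_trans h; apply: near_eq_cvg.
by apply: filterS e => j ->.
Qed.

Section An.
Variables (R : realType) (d : nat) (F : set 'rV[R]_d).
Local Notation C := (conv_hull F).

Definition recd (v : 'rV[R]_d) :=
  forall y, closure C y -> forall t, 0 <= t -> closure C (y + t *: v).

Lemma rec0 : recd 0.
Proof. by move=> y Ky t _; rewrite scaler0 addr0. Qed.

Lemma recD u v : recd u -> recd v -> recd (u + v).
Proof. by move=> ru rv y Ky t t0; rewrite scalerDr addrA; apply: rv => //; exact: ru. Qed.

Lemma rec_of_C v : (forall y, C y -> forall t, 0 <= t -> closure C (y + t *: v)) -> recd v.
Proof.
move=> H y Ky t t0.
have PF : ProperFilter (within C (nbhs y)) by apply: within_nbhs_proper.
apply: (@closed_cvg _ _ (within C (nbhs y)) _ (fun z => z + t *: v) _ (@closed_closure _ C)).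
  by apply: filterS (withinT _ _) => z Cz; exact: H.
apply: cvgD; last exact: cvg_cst.
exact: cvg_within.
Qed.

Lemma rec_lim {T : Type} (U : set_system T) {UP : ProperFilter U}
  (a : T -> R) (p : T -> 'rV[R]_d) z :
  (\forall j \near U, 0 <= a j /\ C (p j)) -> a @ U --> 0 ->
  (fun j => a j *: p j) @ U --> z -> recd z.
Proof.
move=> ev a0 az; apply: rec_of_C => y Cy t t0.
have ta0 : (fun j => t * a j) @ U --> 0.
  have h := @cvgMr _ _ _ _ _ t _ a0; rewrite mulr0 in h; exact: h.
have ta1 : \forall j \near U, `|t * a j| <= 1 by apply: cvgr0_norm_le.
apply: (@closed_cvg _ _ U _ (fun j => (1 - t * a j) *: y + (t * a j) *: p j) _ (@closed_closure _ C)).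
  apply: filterS2 ev ta1 => j [aj0 Cp] tj; apply: subset_closure.
  have tj' : 0 <= t * a j by rewrite mulr_ge0.
  apply: conv_comb => //; apply: le_trans tj; rewrite real_ler_norm //.
  exact: ger0_real.
have -> : (fun j => (1 - t * a j) *: y + (t * a j) *: p j) =
          (fun j => y - (t * a j) *: y + t *: (a j *: p j)).
  by apply/funext => j; rewrite scalerBl scale1r scalerA.
have -> : y + t *: z = y - 0 *: y + t *: z by rewrite scale0r subr0.
apply: cvgD; last exact: cvgZ (cvg_cst _) az.
apply: cvgB; first exact: cvg_cst.
exact: cvgZ ta0 (cvg_cst _).
Qed.

Lemma ray_hit x v :
  (forall x e : 'rV[R]_d, e != 0 -> ~ (ray x e `<=` boundary C)) ->
  closure C x -> v != 0 -> recd v -> exists t, 0 <= t /\ C (x + t *: v).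
Proof.
move=> Hray Kx v0 rv; apply: contrapT => H; apply: (Hray x v v0) => _ [t t0 <-].
split; first exact: rv.
by move=> /interior_subset Cz; apply: H; exists t.
Qed.

Lemma conv_two x u t s : C (x + t *: u) -> C (x - s *: u) -> 0 <= t -> 0 <= s -> C x.
Proof.
move=> C1 C2 t0 s0.
have [st0|st0] := eqVneq (s + t) 0.
  have t00 : t = 0.
    apply/eqP; rewrite eq_le t0 andbT; rewrite -st0 lerDr //.
  by move: C1; rewrite t00 scale0r addr0.
have stp : 0 < s + t by rewrite lt_def st0 addr_ge0.
set l := t / (s + t).
have l0 : 0 <= l by rewrite divr_ge0 // addr_ge0.
have l1 : l <= 1 by rewrite ler_pdivrMr // mul1r lerDr.
have -> : x = (1 - l) *: (x + t *: u) + l *: (x - s *: u).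
  rewrite !scalerDr !scalerN !scalerA addrACA -scalerDl subrK scale1r -scalerBl.
  have -> : (1 - l) * t - l * s = 0.
    rewrite /l; field; exact: st0.
  by rewrite scale0r addr0.
exact: conv_comb.
Qed.

Lemma F_sub_C p : F p -> C p.
Proof.
move=> Fp; exists 1%N, (fun _ => 1), (fun _ => p); split => //.
- by rewrite big_ord1.
- by rewrite big_ord1 scale1r.
Qed.

End An.

Unset Implicit Arguments.

Theorem mainTheorem4 (R : realType) (d : nat) (F : set 'rV[R]_d) :
  closed F ->
  (forall x e : 'rV[R]_d, e != 0 -> ~ (ray x e `<=` boundary (conv_hull F))) ->
  closure (conv_hull F) = conv_hull F.
Proof.
move=> Fc Hray; set C := conv_hull F.
apply/seteqP; split; last exact: subset_closure.
move=> x Kx.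
pose N := d.+1.
have Hch : forall j : 'rV[R]_d, exists y : ('I_N -> R) * ('I_N -> 'rV[R]_d),
   C j -> [/\ (forall i, 0 <= y.1 i), \sum_i y.1 i = 1,
         (forall i, F (y.2 i)) & j = \sum_i y.1 i *: y.2 i].
  move=> j; case: (pselect (C j)) => Cj; last first.
    by exists (fun _ => 0, fun _ => 0).
  have [w [p [w0 w1 pF e]]] := caratheodory Cj.
  by exists (w, p).
have [rf Hrf] := choice Hch.
pose W j i := (rf j).1 i; pose P j i := (rf j).2 i.
have PF : ProperFilter (within C (nbhs x)) by apply: within_nbhs_proper.
have [V [UV sub]] := ultraFilterLemma PF.
have PV : ProperFilter V := @ultra_proper _ _ UV.
have hC : within C (nbhs x) C by rewrite /within; apply: nearW => y.
have VC : V C := sub _ hC.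
have Vx : V --> x by move=> B nB; apply: (sub B); rewrite /within; apply: filterS nB => y By _.
have [j0 Cj0] := filter_ex VC.
pose f0 := P j0 ord0.
have Ff0 : F f0 by have [_ _ pF _] := Hrf j0 Cj0; exact: pF.
have W01 j i : C j -> 0 <= W j i <= 1.
  move=> Cj; have [w0 w1 _ _] := Hrf j Cj; rewrite w0 /= -w1.
  by apply: le_sum_term => k; exact: w0.
have Hwc : forall i, exists l : R, 0 <= l <= 1 /\ (fun j => W j i) @ V --> l.
  move=> i.
  have cA : compact (`[0, 1] : set R) := @segment_compact R 0 1.
  have h : V ((fun j => W j i) @^-1` `[0, 1]).
    by apply: filterS VC => j Cj; rewrite /= in_itv; exact: W01.
  have [l [l01 hl]] := ultra_lim UV cA h.
  by exists l; split => //; move: l01; rewrite in_itv.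
have [wl Hwl] := choice Hwc.
pose z j i := W j i *: P j i.
pose m j := \sum_i `|z j i|.
have m0 j : 0 <= m j by apply: sumr_ge0 => i _.
have zm j i : `|z j i| <= m j by apply: (le_sum_term (f := fun k => `|z j k|)) => k.
have Hsum j : C j -> j = \sum_i z j i by move=> Cj; have [_ _ _ e] := Hrf j Cj; exact: e.
have Hsumw j : C j -> \sum_i W j i = 1 by move=> Cj; have [_ e _ _] := Hrf j Cj; exact: e.
have HF j i : C j -> F (P j i) by move=> Cj; have [_ _ e _] := Hrf j Cj; exact: e.
have HW0 j i : C j -> 0 <= W j i by move=> Cj; have /andP[] := W01 j i Cj.
case: (pselect (exists M : R, V [set j | m j <= M])) => [[M VM]|NB].
  have Hzc : forall i, exists l : 'rV[R]_d, (fun j => z j i) @ V --> l.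
    move=> i; have h : V ((fun j => z j i) @^-1` [set v : 'rV[R]_d | `|v| <= M]).
      by apply: filterS VM => j /= mj; exact: le_trans (zm j i) mj.
    by have [l [_ hl]] := ultra_lim UV (@ball_compact R d M) h; exists l.
  have [zl Hzl] := choice Hzc.
  have xz : x = \sum_i zl i.
    apply: (lim_uniq (PU := PV) (f := fun j => \sum_i z j i)); last exact: (cvg_bigsum (f := fun i j => z j i) Hzl).
    have Vx2 : (fun j : 'rV[R]_d => j) @ V --> x := Vx.
    apply: (lim_near _ Vx2).
    by apply: filterS VC => j Cj; rewrite -Hsum.
  have sw : \sum_i wl i = 1.
    apply: (lim_uniq (PU := PV) (f := fun j => \sum_i W j i)); first exact: (cvg_bigsum (f := fun i j => W j i) (fun i => (Hwl i).2)).
    apply: (lim_near (FU := PV) (g := fun _ => (1 : R))); last exact: cvg_cst.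
    by apply: filterS VC => j Cj; rewrite Hsumw.
  pose q i := if wl i == 0 then f0 else (wl i)^-1 *: zl i.
  have Fq i : F (q i).
    rewrite /q; case: eqP => [_|/eqP wn] //.
    have ev : \forall j \near V, W j i != 0.
      have wp : 0 < `|wl i| by rewrite normr_gt0.
      have := @cvgr_dist_lt _ _ _ _ PV _ _ (Hwl i).2 _ wp.
      apply: filterS => j /=; apply: contraTneq => ->.
      by rewrite subr0 ltxx.
    apply: (@closed_cvg _ _ V PV (fun j => (W j i)^-1 *: z j i) F Fc).
      apply: filterS2 ev VC => j wn0 Cj; rewrite /z scalerA mulVf // scale1r; exact: HF.
    apply: cvgZ; last exact: Hzl.
    exact: (cvgV wn (Hwl i).2).
  have Cy : C (\sum_i wl i *: q i).
    by exists N, wl, q; split => // i; case/andP: (Hwl i).1.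
  pose v := \sum_i (if wl i == 0 then zl i else 0).
  have rv : recd F v.
    rewrite /v; apply: big_ind; [exact: rec0 | exact: recD | ].
    move=> i _; case: eqP => [w0|_]; last exact: rec0.
    apply: (rec_lim (UP := PV) (a := fun j => W j i) (p := fun j => P j i)).
    - apply: filterS VC => j Cj; split; [exact: HW0 | exact/F_sub_C/HF].
    - by rewrite -w0; exact: (Hwl i).2.
    - exact: Hzl.
  have xyv : x = \sum_i wl i *: q i + v.
    rewrite xz /v -big_split /=; apply: eq_bigr => i _; rewrite /q.
    case: eqP => [->|/eqP wn]; first by rewrite scale0r add0r.
    by rewrite scalerA mulfV // scale1r addr0.
  have [v0|vn0] := eqVneq v 0; first by rewrite xyv v0 addr0.
  have [t [t0 Ct]] := ray_hit Hray Kx vn0 rv.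
  apply: (conv_two (u := v) (t := t) (s := 1)) => //.
  by rewrite scale1r xyv addrK.
have Vbig : forall M, V [set j | M < m j].
  move=> M; case: (in_ultra_setVsetC [set j | m j <= M] UV) => h.
    by exfalso; apply: NB; exists M.
  by apply: filterS h => j /= hj; rewrite ltNge; apply/negP.
have mpos : V [set j | 0 < m j] := Vbig 0.
have minv0 : (fun j => (m j)^-1) @ V --> 0.
  apply/(@cvgr0Pnorm_lt _ _ _ _ PV) => e e0.
  apply: filterS (Vbig e^-1) => j /= ej.
  have mj0 : 0 < m j by apply: lt_trans ej; rewrite invr_gt0.
  rewrite ger0_norm ?invr_ge0 ?ltW // invf_plt ?posrE //.
have Vx2 : (fun j : 'rV[R]_d => j) @ V --> x := Vx.
pose y j i := (m j)^-1 *: z j i.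
have Hyc : forall i, exists l : 'rV[R]_d, (fun j => y j i) @ V --> l.
  move=> i; have h : V ((fun j => y j i) @^-1` [set v : 'rV[R]_d | `|v| <= 1]).
    apply: filterS mpos => j /= mj; rewrite /y normrZ ger0_norm; last by rewrite invr_ge0 ltW.
    by rewrite mulrC ler_pdivrMr // mul1r.
  by have [l [_ hl]] := ultra_lim UV (@ball_compact R d 1) h; exists l.
have [zeta Hzeta] := choice Hyc.
have s1 : \sum_i `|zeta i| = 1.
  apply: (lim_uniq (PU := PV) (f := fun j => \sum_i `|y j i|)).
    apply: (cvg_bigsum (f := fun i j => `|y j i|)) => i.
    exact: (@cvg_norm _ _ _ _ PV _ _ (Hzeta i)).
  apply: (lim_near (FU := PV) (g := fun _ => (1 : R))); last exact: cvg_cst.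
  apply: filterS mpos => j /= mj.
  rewrite (eq_bigr (fun i => (m j)^-1 * `|z j i|)); last first.
    by move=> i _; rewrite /y normrZ ger0_norm // invr_ge0 ltW.
  by rewrite -mulr_sumr mulVf // gt_eqF.
have [i1 zi1] : exists i, zeta i != 0.
  apply: contrapT => H.
  have : \sum_i `|zeta i| = 0.
    apply: big1 => i _; apply/eqP; rewrite normr_eq0.
    by apply/negPn/negP => hh; apply: H; exists i.
  by rewrite s1 => /eqP; rewrite oner_eq0.
have s0 : \sum_i zeta i = 0.
  apply: (lim_uniq (PU := PV) (f := fun j => \sum_i y j i)); first exact: (cvg_bigsum (f := fun i j => y j i) Hzeta).
  apply: (lim_near (FU := PV) (g := fun j => (m j)^-1 *: j)).
    by apply: filterS VC => j Cj; rewrite /y -scaler_sumr -Hsum.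
  have -> : (0 : 'rV[R]_d) = 0 *: x by rewrite scale0r.
  exact: (@cvgZ _ _ _ _ PV _ _ _ _ minv0 Vx2).
have rz i : recd F (zeta i).
  apply: (rec_lim (UP := PV) (a := fun j => W j i * (m j)^-1) (p := fun j => P j i)).
  - apply: filterS VC => j Cj; split; last exact/F_sub_C/HF.
    by rewrite mulr_ge0 ?invr_ge0 // HW0.
  - have h := @cvgM _ _ _ PV _ _ _ _ (Hwl i).2 minv0; rewrite mulr0 in h; exact: h.
  - apply: (lim_near (FU := PV) (g := fun j => y j i)); last exact: Hzeta.
    by apply: nearW => j; rewrite /y /z scalerA mulrC.
have rmz : recd F (- zeta i1).
  have -> : - zeta i1 = \sum_(i | i != i1) zeta i.
    by move: s0; rewrite (bigD1 i1) //= => /eqP; rewrite addr_eq0 => /eqP ->; rewrite opprK.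
  by apply: big_ind; [exact: rec0 | exact: recD | move=> i _; exact: rz].
have [t [t0 Ct]] := ray_hit Hray Kx zi1 (rz i1).
have nzi1 : - zeta i1 != 0 by rewrite oppr_eq0.
have [s [s0' Cs]] := ray_hit Hray Kx nzi1 rmz.
apply: (conv_two (u := zeta i1) (t := t) (s := s)) => //.
by rewrite -scalerN.
Qed.
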